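(* Let $Q$ be an $s\times t$ real matrix with $s\le t$, let $T$ be a maximal transversal of $Q$ (i.e. $|T|={\rm tdet}(Q)$), and let $a$ be an entry of $T$. Let $R$ be the sum of the entries in the row of $Q$ containing $a$ and $C$ the sum of the entries in the column of $Q$ containing $a$. Then $$R+C\le {\rm tdet}(Q)+t\,a.$$
   Context: For an $s\times t$ matrix $Q=(a_{ij})$ with $s\le t$, a transversal of $Q$ is a set of entries $T=\{a_{1i_1},\dots,a_{si_s}\}$ with $i_1,\dots,i_s\in\{1,\dots,t\}$ pairwise distinct, and $|T|=a_{1i_1}+\cdots+a_{si_s}$. The tropical determinant is ${\rm tdet}(Q)=\max_T|T|$ over all transversals $T$ of $Q$. *)

(* Defs.v *)
From HB Require Import structures.
From mathcomp Require Import all_boot all_order all_algebra.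
Set Implicit Arguments. Unset Strict Implicit. Unset Printing Implicit Defensive.
Import Order.TTheory GRing.Theory Num.Theory.
Local Open Scope ring_scope.

(* A transversal of an s x t matrix (s <= t) is given by an injective choice
   of column f i for each row i; its value |T| is the sum of the chosen entries. *)
Definition is_tdet_transversal (s t : nat) (f : {ffun 'I_s -> 'I_t}) : bool :=
  injectiveb f.

Definition tvalue (R : realFieldType) (s t : nat) (Q : 'M[R]_(s, t))
  (f : {ffun 'I_s -> 'I_t}) : R := \sum_(i < s) Q i (f i).

Definition transversals (s t : nat) : seq {ffun 'I_s -> 'I_t} :=
  [seq f <- enum {ffun 'I_s -> 'I_t} | is_tdet_transversal f].

(* Tropical determinant: maximum of |T| over all transversals T
   (the fold starts from the first value, so it is the genuine maximum
   whenever a transversal exists, i.e. when s <= t). *)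
Definition tdet (R : realFieldType) (s t : nat) (Q : 'M[R]_(s, t)) : R :=
  let l := [seq tvalue Q f | f <- transversals s t] in
  foldr Num.max (head 0 l) l.

(* Main.v *)
Require Import Defs.
From HB Require Import structures.
From mathcomp Require Import all_boot all_order all_algebra.
From mathcomp Require Import lra perm fingroup.
Import Order.TTheory GRing.Theory Num.Theory.
Local Open Scope ring_scope.

Lemma tdet_ge (R : realFieldType) (s t : nat) (Q : 'M[R]_(s, t))
  (g : {ffun 'I_s -> 'I_t}) : injectiveb g -> tvalue Q g <= tdet Q.
Proof.
move=> hg; rewrite /tdet.
set l := map _ _.
have : tvalue Q g \in l.
  by apply: map_f; rewrite mem_filter /is_tdet_transversal hg mem_enum.
move: (head 0 l) => d; elim: l => //= x l IH.
rewrite in_cons => /orP[/eqP->|/IH h]; first by rewrite le_max lexx.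
by rewrite le_max h orbT.
Qed.

Arguments tdet_ge {R s t} Q g _.

Theorem lemma2p2 (R : realFieldType) (s t : nat) (Q : 'M[R]_(s, t))
  (hst : (s <= t)%N) (T : {ffun 'I_s -> 'I_t})
  (hT : is_tdet_transversal T) (hmax : tvalue Q T = tdet Q) (i : 'I_s) :
  \sum_(j < t) Q i j + \sum_(k < s) Q k (T i) <= tdet Q + t%:R * Q i (T i).
Proof.
have Tinj : injective T by apply/injectiveP.
have hsw : forall l : 'I_s, Q i (T l) + Q l (T i) <= Q i (T i) + Q l (T l).
  move=> l; have [->|hli] := eqVneq l i; first by rewrite lexx.
  pose g := [ffun k => T (tperm i l k)].
  have hg : injectiveb g.
    by apply/injectiveP => x y; rewrite !ffunE => /Tinj /perm_inj.
  have := tdet_ge Q g hg; rewrite -hmax /tvalue => h.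
  have e : \sum_k Q k (g k) - \sum_k Q k (T k)
      = Q i (T l) + Q l (T i) - Q i (T i) - Q l (T l).
    rewrite -sumrB (bigD1 i) //= (bigD1 l) ?hli //= big1.
      rewrite !ffunE tpermL tpermR; lra.
    move=> k /andP[ki kl]; rewrite ffunE tpermD 1?eq_sym ?ki ?kl //; lra.
  move: h; rewrite -subr_ge0 -opprB e; lra.
set im := [set T l | l in [set: 'I_s]].
have hc : forall c, c \notin im -> Q i c <= Q i (T i).
  move=> c hc.
  pose g := [ffun k => if k == i then c else T k].
  have hg : injectiveb g.
    apply/injectiveP => x y; rewrite !ffunE.
    have [xi|xi] := eqVneq x i; have [yi|yi] := eqVneq y i.
    - by rewrite xi yi.
    - by move=> e; move: hc; rewrite e imset_f ?inE.
    - by move=> e; move: hc; rewrite -e imset_f ?inE.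
    - exact: Tinj.
  have := tdet_ge Q g hg; rewrite -hmax /tvalue => h.
  have e : \sum_k Q k (g k) - \sum_k Q k (T k) = Q i c - Q i (T i).
    rewrite -sumrB (bigD1 i) //= big1.
      rewrite !ffunE eqxx; lra.
    move=> k ki; rewrite ffunE (negbTE ki); lra.
  move: h; rewrite -subr_ge0 -opprB e; lra.
rewrite (bigID (mem im)) /=.
have e1 : \sum_(j < t | j \in im) Q i j = \sum_(l < s) Q i (T l).
  rewrite big_imset /=; last by move=> x y _ _; exact: Tinj.
  by apply: eq_bigl => x; rewrite inE.
rewrite e1.
have h2 : \sum_(j < t | j \notin im) Q i j <= Q i (T i) *+ (t - s).
  apply: le_trans (ler_sum _ (fun j hj => hc j hj)) _.
  rewrite sumr_const.
  have -> : #|(fun j => j \notin im)| = #|~: im|.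
    by apply: eq_card => j; rewrite inE.
  have hc1 := cardsC im.
  have hc2 : #|im| = s by rewrite card_imset ?cardsT ?card_ord //; exact: Tinj.
  rewrite card_ord hc2 in hc1.
  have -> : #|~: im| = (t - s)%N by apply/eqP; rewrite -(eqn_add2l s) subnKC // hc1.
  by [].
have h1 : \sum_(l < s) Q i (T l) + \sum_(k < s) Q k (T i)
    <= Q i (T i) *+ s + tvalue Q T.
  have -> : Q i (T i) *+ s = \sum_(l < s) Q i (T i) by rewrite sumr_const card_ord.
  rewrite -big_split /= /tvalue -big_split /=.
  by apply: ler_sum => l _; exact: hsw.
rewrite -hmax.
rewrite -[Q i (T i) *+ s]mulr_natl in h1.
rewrite -[Q i (T i) *+ (t - s)]mulr_natl natrB // in h2.
lra.
Qed.
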